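(* Let $c\ge1$, $d,n\in\mathbb N$ and $A_1,\dots,A_n\in\mathcal T_c(d)$. Then for all $1\le j\le i\le d$, $$|(A_1\cdots A_n)_{ij}|\le(cn)^{i-j}|(A_1\cdots A_n)_{jj}|.$$
   Context: $\mathcal T_c(d)$ denotes the set of real $d\times d$ lower triangular matrices $A=(a_{ij})$ such that (i) $|a_{11}|\ge|a_{22}|\ge\dots\ge|a_{dd}|>0$ and (ii) $|a_{ij}|\le c|a_{jj}|$ for all $1\le i,j\le d$. *)

(* Defs.v *)
From HB Require Import structures.
From mathcomp Require Import all_boot all_order all_algebra.
Set Implicit Arguments. Unset Strict Implicit. Unset Printing Implicit Defensive.
Import Order.TTheory GRing.Theory Num.Theory.
Local Open Scope ring_scope.

(* T_c(d): real d x d lower triangular matrices A = (a_ij) with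
   (i) |a_11| >= |a_22| >= ... >= |a_dd| > 0 and
   (ii) |a_ij| <= c |a_jj| for all i, j.  Indices are 0-based ('I_d). *)
Definition in_Tc (R : realFieldType) (c : R) (d : nat) (A : 'M[R]_d) : Prop :=
  (forall i j : 'I_d, (i < j)%N -> A i j = 0) /\
  (forall i j : 'I_d, (i <= j)%N -> `|A j j| <= `|A i i|) /\
  (forall i : 'I_d, 0 < `|A i i|) /\
  (forall i j : 'I_d, `|A i j| <= c * `|A j j|).

Definition mxprod (R : realFieldType) (d n : nat) (A : nat -> 'M[R]_d) : 'M[R]_d :=
  foldr (fun k M => A k *m M) 1%:M (iota 0 n).

(* Main.v *)
Set Warnings "-notation-overridden -ambiguous-paths".
Require Import Defs.
From HB Require Import structures.
From mathcomp Require Import all_boot all_order all_algebra.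
Import Order.TTheory GRing.Theory Num.Theory.
Local Open Scope ring_scope.

Lemma mxprodS (R : realFieldType) d n (A : nat -> 'M[R]_d) :
  mxprod n.+1 A = A 0%N *m mxprod n (fun k => A k.+1).
Proof.
rewrite /mxprod /= -[1%N]addn0 iotaDl foldr_map //.
Qed.

Lemma geom_ineq (R : realFieldType) (x c : R) (m : nat) :
  0 <= x -> 1 <= c ->
  x ^+ m + \sum_(k < m) c * x ^+ k <= (x + c) ^+ m.
Proof.
move=> x0 c1; elim: m => [|m IH]; first by rewrite big_ord0 addr0.
rewrite big_ord_recl /= expr0 mulr1.
have -> : \sum_(i < m) c * x ^+ (bump 0 i) = x * \sum_(k < m) c * x ^+ k.
  by rewrite mulr_sumr; apply: eq_bigr => k _; rewrite exprS mulrCA.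
have c0 : 0 <= c by apply: le_trans c1.
have xc1 : 1 <= x + c by rewrite -[1]add0r lerD.
have h1 : 1 <= (x + c) ^+ m by rewrite exprn_ege1.
rewrite [(x + c) ^+ m.+1]exprS mulrDl [x ^+ m.+1]exprS.
rewrite [c + _]addrC addrA -mulrDr lerD //; first by rewrite ler_wpM2l.
by rewrite -[X in X <= _]mulr1 ler_wpM2l.
Qed.

Definition Wf {R : realFieldType} (x c : R) (i j : nat) (l : nat) : R :=
  if (j <= l <= i)%N then (if l == i then x ^+ (i - j) else c * x ^+ (l - j)) else 0.

Lemma sumW (R : realFieldType) (x c : R) d (i j : nat) : (j <= i)%N -> (i < d)%N ->
  \sum_(l < d) Wf x c i j l = x ^+ (i - j) + \sum_(k < i - j) c * x ^+ k.
Proof.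
move=> ji id.
rewrite -(big_mkord xpredT (Wf x c i j)) (big_cat_nat _ (n := i.+1)) //=.
have -> : \sum_(i.+1 <= l < d) Wf x c i j l = 0.
  rewrite big_nat_cond big1 // => l /andP[/andP[h1 _] _]; rewrite /Wf; case: ifP => //.
  by case/andP=> _ h; move: (leq_ltn_trans h h1); rewrite ltnn.
rewrite addr0 (big_cat_nat _ (n := j)) //=; last exact: (leq_trans ji).
have -> : \sum_(0 <= l < j) Wf x c i j l = 0.
  rewrite big_nat_cond big1 // => l /andP[/andP[_ h1] _]; rewrite /Wf; case: ifP => //.
  by case/andP=> h _; move: (leq_ltn_trans h h1); rewrite ltnn.
rewrite add0r.
rewrite -{1}[j]add0n big_addn.
have -> : (i.+1 - j = (i - j).+1)%N by rewrite subSn.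
rewrite big_nat_recr //= addrC big_mkord; congr (_ + _).
  by rewrite /Wf subnK // leqnn ji eqxx.
apply: eq_bigr => k _; rewrite /Wf leq_addl addnK.
have hk : (k + j < i)%N by rewrite addnC -ltn_subRL.
by rewrite (ltnW hk) (ltn_eqF hk).
Qed.

Lemma mainlem (R : realFieldType) (c : R) d (c1 : 1 <= c) n (A : nat -> 'M[R]_d) :
  (forall k, (k < n)%N -> in_Tc c (A k)) ->
  (forall i j : 'I_d, (i < j)%N -> mxprod n A i j = 0) /\
  (forall i j : 'I_d, (j <= i)%N ->
    `|mxprod n A i j| <= (c * n%:R) ^+ (i - j) * `|mxprod n A j j|).
Proof.
have c0 : 0 <= c by apply: le_trans c1.
elim: n A => [|n IH] A HA.
  rewrite /mxprod /=; split => i j h; rewrite !mxE.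
    have ne : i != j by apply/eqP => e; rewrite e ltnn in h.
    by rewrite (negbTE ne).
  case: (eqVneq i j) => [->|ne]; first by rewrite subnn expr0 mul1r eqxx.
  rewrite ?eqxx.
  by rewrite normr0 mulr0; apply: mulr_ge0 => //; rewrite exprn_ge0.
rewrite mxprodS.
set Q := mxprod n (fun k => A k.+1).
have [QT QB] := IH (fun k => A k.+1) (fun k hk => HA k.+1 hk).
have [AT [AD [AP AB]]] := HA 0%N (ltn0Sn n).
have PD : forall j, (A 0%N *m Q) j j = A 0%N j j * Q j j.
  move=> j; rewrite mxE (bigD1 j) //= big1 ?addr0 // => l ne.
  case: (ltngtP l j) => hl.
  - by rewrite QT ?mulr0.
  - by rewrite AT ?mul0r.
  - by move/val_inj: hl => e; rewrite e eqxx in ne.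
split.
  move=> i j h; rewrite mxE big1 // => l _.
  case: (leqP l i) => hl.
    by rewrite QT ?mulr0 //; exact: leq_ltn_trans hl h.
  by rewrite AT ?mul0r.
move=> i j ji.
set x := c * n%:R.
have x0 : 0 <= x by rewrite mulr_ge0.
have -> : c * (n.+1)%:R = x + c by rewrite mulrSr mulrDr mulr1.
rewrite mxE PD normrM.
set K := `|A 0%N j j| * `|Q j j|.
apply: le_trans (ler_norm_sum _ _ _) _.
apply: (@le_trans _ _ (\sum_(l<d) K * Wf x c i j l)).
  apply: ler_sum => l _; rewrite normrM /Wf.
  case: (ltnP l j) => hlj.
    rewrite QT // normr0 mulr0.
    by rewrite /= mulr0.
  case: (leqP l i) => hli; last first.
    rewrite AT // normr0 mul0r.
    by rewrite andbF mulr0.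
  rewrite /=; case: eqP => [eli|nli].
    have eli' : l = i by apply: val_inj.
    subst l; rewrite /K -mulrA; apply: ler_pM => //; first exact: AD.
    by rewrite mulrC; apply: QB.
  have -> : K * (c * x ^+ (l - j)) = (c * `|A 0%N j j|) * (x ^+ (l - j) * `|Q j j|)
    by rewrite /K mulrACA [`|A 0%N j j| * c]mulrC [`|Q j j| * _]mulrC.
  apply: ler_pM => //.
    apply: le_trans (AB i l) _; apply: ler_wpM2l => //; exact: AD.
  exact: QB.
rewrite -mulr_sumr sumW // mulrC; apply: ler_wpM2r.
  by rewrite /K mulr_ge0.
exact: geom_ineq.
Qed.

Theorem lemma4p4 (R : realFieldType) (c : R) (d n : nat) (A : nat -> 'M[R]_d) :
  1 <= c ->
  (forall k, (k < n)%N -> in_Tc c (A k)) ->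
  forall i j : 'I_d, (j <= i)%N ->
    `|mxprod n A i j| <= (c * n%:R) ^+ (i - j) * `|mxprod n A j j|.
Proof.
move=> c1 HA i j ji; exact: (@mainlem R c d c1 n A HA).2 i j ji.
Qed.
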